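(* For every integer $r\ge2$, $$ \begin{aligned} \int_0^{\frac\pi2} \theta^{r-2}\log\left(\cos\frac\theta2\right)d\theta &=-\frac{\log2}{r-1}\left(\frac\pi2\right)^{r-1}+(r-2)!\sin\left(\frac{r\pi}{2}\right)\zeta_E(r) \\ &\quad+\sum_{k=0}^{\lfloor \frac{r-2}{2}\rfloor }(-1)^k(2k)!\binom{r-2}{2k}\left(\frac\pi2\right)^{r-2k-2}\beta(2k+2) \\ &\quad+\sum_{k=1}^{\lceil \frac{r-2}2\rceil}\frac{(-1)^{k-1}(2k-1)!}{2^{2k+1}}\binom{r-2}{2k-1}\left(\frac\pi2\right)^{r-2k-1}\zeta_E(2k+1). \end{aligned} $$
   Context: $\zeta_E(s)=\sum_{n=1}^\infty\frac{(-1)^{n+1}}{n^s}=(1-2^{1-s})\zeta(s)$ (alternating zeta function), $\beta(s)=\sum_{n=0}^\infty\frac{(-1)^n}{(2n+1)^s}$ (Dirichlet beta function). $\lfloor\cdot\rfloor$, $\lceil\cdot\rceil$ are floor and ceiling; an empty sum is $0$. *)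

(* Defs.v *)
From Stdlib Require Import Reals Arith.
From Coquelicot Require Import Coquelicot.
Open Scope R_scope.

Definition zetaE (s : nat) : R :=
  Series (fun n : nat => (-1) ^ n / (INR (n + 1)) ^ s).

Definition dbeta (s : nat) : R :=
  Series (fun n : nat => (-1) ^ n / (INR (2 * n + 1)) ^ s).

(* Main.v *)
Require Import Defs.
From Stdlib Require Import Reals Arith Lra Lia.
From Coquelicot Require Import Coquelicot.
Open Scope R_scope.


Lemma prod2sum y u : 2 * cos u * sin y = sin (y + u) + sin (y - u).
Proof. rewrite sin_plus, sin_minus; ring. Qed.

Lemma alt_sin_sum x N :
  2 * cos (x/2) * sum_f_R0 (fun n => (-1)^n * sin (INR (n+1) * x)) N
  = sin (x/2) + (-1)^N * sin ((INR N + 3/2) * x).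
Proof.
  induction N as [|N IH].
  - simpl. replace (1 * x) with x by ring.
    replace ((0 + 3/2)*x) with (x + x/2) by field.
    assert (E: sin (x/2) = sin x * cos (x/2) - cos x * sin (x/2))
      by (rewrite <- sin_minus; f_equal; field).
    rewrite sin_plus. lra.
  - rewrite tech5, Rmult_plus_distr_l, IH.
    replace (2 * cos (x / 2) * ((-1) ^ S N * sin (INR (S N + 1) * x)))
      with ((-1)^S N * (2 * cos (x/2) * sin (INR (S N + 1) * x))) by ring.
    rewrite prod2sum.
    replace (INR (S N + 1) * x + x/2) with ((INR (S N) + 3/2) * x)
      by (rewrite !plus_INR, !S_INR; simpl; field).
    replace (INR (S N + 1) * x - x/2) with ((INR N + 3/2) * x)
      by (rewrite !plus_INR, !S_INR; simpl; field).
    simpl pow. ring.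
Qed.

Lemma sin_mPI2 t : sin (t - PI/2) = - cos t.
Proof. rewrite sin_minus, sin_PI2, cos_PI2; ring. Qed.
Lemma cos_mPI2 t : cos (t - PI/2) = sin t.
Proof. rewrite cos_minus, sin_PI2, cos_PI2; ring. Qed.

Fixpoint P (m : nat) (nu phi x : R) : R :=
  match m with
  | O => cos (nu * x - phi - PI/2) / nu
  | S k => x ^ (S k) * cos (nu * x - phi - PI/2) / nu - INR (S k) / nu * P k nu (phi + PI/2) x
  end.

Lemma xpow_pred x m : x * (INR m * x ^ Init.Nat.pred m) = INR m * x ^ m.
Proof. destruct m; simpl; ring. Qed.

Lemma P_derive m nu phi x : nu <> 0 ->
  is_derive (fun y => P m nu phi y) x (x ^ m * cos (nu * x - phi)).
Proof.
  intro Hnu. revert phi. induction m as [|m IH]; intro phi.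
  - simpl. auto_derive. auto.
    replace (nu * x + - phi + - (PI/2)) with ((nu*x - phi) - PI/2) by ring.
    rewrite sin_mPI2. field. auto.
  - simpl P. specialize (IH (phi + PI/2)).
    auto_derive.
    + eexists; exact IH.
    + match goal with |- context [Derive ?f x] =>
        replace (Derive f x) with (x^m * cos(nu*x-(phi+PI/2)))
          by (symmetry; apply is_derive_unique; exact IH) end.
      change (match m with 0%nat => 1 | S _ => INR m + 1 end) with (INR (S m)).
      repeat rewrite Rmult_1_l. rewrite xpow_pred.
      replace (nu * x + - phi + - (PI/2)) with ((nu*x - phi) - PI/2) by ring.
      replace (nu * x - (phi + PI / 2)) with ((nu*x - phi) - PI/2) by ring.
      rewrite sin_mPI2, cos_mPI2, S_INR. simpl pow. field. auto.
Qed.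


Lemma P_at0 m nu phi : nu <> 0 ->
  P m nu phi 0 = (-1)^m * INR (fact m) * cos (-phi - INR (m+1) * (PI/2)) / nu^(m+1).
Proof.
  intro Hnu. revert phi. induction m as [|m IH]; intro phi.
  - simpl P. replace (nu*0 - phi - PI/2) with (-phi - INR (0+1) * (PI/2)) by (simpl; ring).
    simpl. field. auto.
  - simpl P. rewrite IH.
    replace (- (phi + PI / 2) - INR (m + 1) * (PI / 2)) with (- phi - INR (S m + 1) * (PI / 2))
      by (rewrite !plus_INR, !S_INR; simpl; ring).
    replace (fact (S m)) with (S m * fact m)%nat by reflexivity.
    rewrite mult_INR. simpl pow. change (match m with 0%nat => 1 | S _ => INR m + 1 end) with (INR (S m)). field. split; auto.
    apply pow_nonzero; auto.
Qed.

Definition Pc (m : nat) (nu phi x : R) : R :=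
  sum_f_R0 (fun j => (-1)^j * (INR (fact m) / INR (fact (m-j))) * x^(m-j)
                      * cos (nu*x - phi - INR (j+1) * (PI/2)) / nu^(j+1)) m.

Lemma sum_scal_l c f N : sum_f_R0 (fun i => c * f i) N = c * sum_f_R0 f N.
Proof. induction N; simpl; [ring| rewrite IHN; ring]. Qed.

Lemma P_closed m nu phi x : nu <> 0 -> P m nu phi x = Pc m nu phi x.
Proof.
  intro Hnu. revert phi. induction m as [|m IH]; intro phi.
  - unfold Pc. simpl. replace (nu * x - phi - 1 * (PI/2)) with (nu * x - phi - PI/2) by ring.
    field. auto.
  - simpl P. rewrite IH. unfold Pc. rewrite (decomp_sum _ (S m)) by lia. simpl pred.
    unfold Rminus at 1. f_equal.
    + rewrite Nat.sub_0_r. replace (INR (0+1)) with 1 by (simpl; ring).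
      simpl pow. replace (1 * (PI/2)) with (PI/2) by ring. field. split. apply INR_fact_neq_0. exact Hnu.
    + symmetry. change (match m with 0%nat => 1 | S _ => INR m + 1 end) with (INR (S m)).
      rewrite Ropp_mult_distr_l, <- sum_scal_l. apply sum_eq. intros i Hi.
      replace (S m - S i)%nat with (m - i)%nat by lia.
      replace (fact (S m)) with (S m * fact m)%nat by reflexivity.
      replace (nu * x - (phi + PI / 2) - INR (i + 1) * (PI / 2)) with (nu * x - phi - INR (S i + 1) * (PI / 2))
        by (rewrite !plus_INR, !S_INR; simpl; ring).
      rewrite mult_INR. simpl pow. field.
      split; [apply INR_fact_neq_0|]. split; [apply pow_nonzero; auto | auto].
Qed.


Lemma cont_der (f : R -> R) x : ex_derive f x -> continuous f x.
Proof. intro H. apply (@ex_derive_continuous R_AbsRing R_NormedModule f x H). Qed.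

Definition qf (m : nat) (a x : R) : R := x^(m+1)/INR(m+1) - a^(m+1)/INR(m+1).

Lemma INR_Sn_pos m : 0 < INR (m+1).
Proof. rewrite plus_INR; simpl; pose proof (pos_INR m); lra. Qed.

Lemma qf_derive m a x : is_derive (qf m a) x (x^m).
Proof.
  unfold qf. auto_derive. pose proof (INR_Sn_pos m); lra.
  replace (Init.Nat.pred (m+1)) with m by lia. field. pose proof (INR_Sn_pos m); lra.
Qed.

Lemma IBP_qsin m a nu : nu <> 0 ->
  is_RInt (fun x => qf m a x * sin (nu*x)) 0 a ((P m nu 0 a - P m nu 0 0 + qf m a 0)/nu).
Proof.
  intro Hnu.
  set (G := fun x => (-(qf m a x) * cos(nu*x) + P m nu 0 x)/nu).
  assert (HG: forall x, is_derive G x (qf m a x * sin (nu*x))).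
  { intro x. unfold G.
    pose proof (P_derive m nu 0 x Hnu) as HP. pose proof (qf_derive m a x) as Hq.
    auto_derive.
    - repeat split; auto; eexists; eauto.
    - match goal with |- context [Derive ?f x] =>
        replace (Derive f x) with (x^m * cos(nu*x-0))
          by (symmetry; apply is_derive_unique; exact HP) end.
      match goal with |- context [Derive ?f x] =>
        replace (Derive f x) with (x^m)
          by (symmetry; apply is_derive_unique; exact Hq) end.
      replace (nu*x - 0) with (nu*x) by ring. field. auto. }
  replace ((P m nu 0 a - P m nu 0 0 + qf m a 0)/nu) with (minus (G a) (G 0)).
  - apply (is_RInt_derive G (fun x => qf m a x * sin (nu*x))).
    + intros; apply HG.
    + intros x _. apply cont_der.
      apply ex_derive_mult. eexists; apply qf_derive. auto_derive; auto.
  - unfold G, minus, plus, opp; simpl.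
    replace (qf m a a) with 0 by (unfold qf; ring).
    replace (nu*0) with 0 by ring. rewrite cos_0. field. auto.
Qed.


Lemma cos_half_pos x : 0 <= x <= PI/2 -> 0 < cos (x/2).
Proof. intros [H1 H2]. pose proof PI_RGT_0. apply cos_gt_0; lra. Qed.

Lemma Rmin_0a : Rmin 0 (PI/2) = 0.
Proof. pose proof PI_RGT_0. rewrite Rmin_left; lra. Qed.
Lemma Rmax_0a : Rmax 0 (PI/2) = PI/2.
Proof. pose proof PI_RGT_0. rewrite Rmax_right; lra. Qed.

Lemma ex_RInt_cont (f : R -> R) a b :
  (forall z, Rmin a b <= z <= Rmax a b -> continuous f z) -> ex_RInt f a b.
Proof. intro H. exact (@ex_RInt_continuous R_CompleteNormedModule f a b H). Qed.

Lemma RInt_corr (f : R -> R) a b : ex_RInt f a b -> is_RInt f a b (RInt f a b).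
Proof. intro H. exact (@RInt_correct R_CompleteNormedModule f a b H). Qed.

Definition g0 m x := qf m (PI/2) x * sin (x/2) / (2 * cos (x/2)).

Lemma g0_ex m : ex_RInt (g0 m) 0 (PI/2).
Proof.
  apply ex_RInt_cont. rewrite Rmin_0a, Rmax_0a. intros z Hz.
  apply cont_der. unfold g0. pose proof (cos_half_pos z Hz).
  apply ex_derive_mult. apply ex_derive_mult. eexists; apply qf_derive.
  auto_derive; auto. auto_derive; lra.
Qed.

Lemma stepA m : is_RInt (fun t => t^m * ln (cos (t/2))) 0 (PI/2) (RInt (g0 m) 0 (PI/2)).
Proof.
  set (a := PI/2).
  set (F := fun x => qf m a x * ln (cos (x/2))).
  set (Fd := fun x => x^m * ln (cos (x/2)) - g0 m x).
  assert (HF: forall x, 0 <= x <= a -> is_derive F x (Fd x)).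
  { intros x Hx. pose proof (cos_half_pos x Hx). unfold F, Fd, g0.
    pose proof (qf_derive m a x) as Hq.
    auto_derive.
    - split; [eexists; eauto| split; [lra| exact I]].
    - match goal with |- context [Derive ?f x] =>
        replace (Derive f x) with (x^m)
          by (symmetry; apply is_derive_unique; exact Hq) end.
      change (x * /2) with (x/2). unfold a. field. lra. }
  assert (H1: is_RInt Fd 0 a (minus (F a) (F 0))).
  { apply (is_RInt_derive F Fd).
    - unfold a; rewrite Rmin_0a, Rmax_0a. intros; apply HF; auto.
    - unfold a; rewrite Rmin_0a, Rmax_0a. intros x Hx. apply cont_der.
      pose proof (cos_half_pos x Hx). unfold Fd, g0.
      auto_derive. repeat split; try lra. eexists; apply qf_derive. }
  assert (H2 := is_RInt_plus _ _ _ _ _ _ H1 (RInt_corr _ _ _ (g0_ex m))).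
  replace (RInt (g0 m) 0 a) with (plus (minus (F a) (F 0)) (RInt (g0 m) 0 a)).
  - eapply is_RInt_ext; [|exact H2]. intros x _. unfold Fd, plus; simpl. ring.
  - unfold F, minus, plus, opp; simpl. unfold a.
    replace (qf m (PI/2) (PI/2)) with 0 by (unfold qf; ring).
    replace (0/2) with 0 by field. rewrite cos_0, ln_1. ring.
Qed.


Definition Vn m n := (P m (INR (n+1)) 0 (PI/2) - P m (INR (n+1)) 0 0 + qf m (PI/2) 0) / INR (n+1).
Definition hf m x := qf m (PI/2) x / (2 * cos (x/2)).

Lemma RInt_plus' (f g : R -> R) a b If Ig :
  is_RInt f a b If -> is_RInt g a b Ig -> is_RInt (fun x => f x + g x) a b (If + Ig).
Proof. intros H1 H2. exact (is_RInt_plus f g a b If Ig H1 H2). Qed.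
Lemma RInt_scal' (f : R -> R) a b k If :
  is_RInt f a b If -> is_RInt (fun x => k * f x) a b (k * If).
Proof. intros H1. exact (is_RInt_scal f a b k If H1). Qed.

Lemma INR_S_neq n : INR (n+1) <> 0.
Proof. pose proof (INR_Sn_pos n); lra. Qed.

Lemma sum_RInt m N : is_RInt (fun x => sum_f_R0 (fun n => (-1)^n * (qf m (PI/2) x * sin (INR (n+1) * x))) N)
   0 (PI/2) (sum_f_R0 (fun n => (-1)^n * Vn m n) N).
Proof.
  induction N as [|N IH].
  - exact (RInt_scal' _ _ _ _ _ (IBP_qsin m (PI/2) (INR (0+1)) (INR_S_neq 0))).
  - simpl sum_f_R0 at 2. apply RInt_plus'. exact IH.
    apply RInt_scal'. apply IBP_qsin. apply INR_S_neq.
Qed.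

Lemma hsin_ex m lam : ex_RInt (fun x => hf m x * sin (lam * x)) 0 (PI/2).
Proof.
  apply ex_RInt_cont. rewrite Rmin_0a, Rmax_0a. intros z Hz.
  apply cont_der. unfold hf. pose proof (cos_half_pos z Hz).
  apply ex_derive_mult. apply ex_derive_mult. eexists; apply qf_derive.
  auto_derive; lra. auto_derive; auto.
Qed.

Lemma stepC m N : sum_f_R0 (fun n => (-1)^n * Vn m n) N =
  RInt (g0 m) 0 (PI/2) + (-1)^N * RInt (fun x => hf m x * sin ((INR N + 3/2) * x)) 0 (PI/2).
Proof.
  set (F := fun x => g0 m x + (-1)^N * (hf m x * sin ((INR N + 3/2) * x))).
  assert (U: forall X Y, is_RInt F 0 (PI/2) X -> is_RInt F 0 (PI/2) Y -> X = Y).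
  { intros X Y H1 H2. rewrite <- (is_RInt_unique (V:=R_CompleteNormedModule) F _ _ _ H1).
    exact (is_RInt_unique (V:=R_CompleteNormedModule) F _ _ _ H2). }
  apply U.
  - eapply is_RInt_ext; [| apply sum_RInt].
    rewrite Rmin_0a, Rmax_0a. intros x Hx.
    assert (Hc: 0 < cos (x/2)) by (apply cos_half_pos; lra).
    assert (E: sum_f_R0 (fun n => (-1)^n * (qf m (PI/2) x * sin (INR (n+1) * x))) N
      = qf m (PI/2) x * sum_f_R0 (fun n => (-1)^n * sin (INR (n+1) * x)) N).
    { rewrite <- sum_scal_l. apply sum_eq. intros; ring. }
    rewrite E. 
    assert (E2 := alt_sin_sum x N).
    replace (sum_f_R0 (fun n => (-1)^n * sin (INR (n+1) * x)) N)
      with ((sin (x/2) + (-1)^N * sin ((INR N + 3/2) * x)) / (2 * cos (x/2)))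
      by (rewrite <- E2; field; lra).
    unfold F, g0, hf. change (?A = ?B) with (@eq R A B). field. lra.
  - apply RInt_plus'. apply RInt_corr, g0_ex. apply RInt_scal'. apply RInt_corr, hsin_ex.
Qed.


Definition hd m x := (x^m * (2*cos(x/2)) + qf m (PI/2) x * sin(x/2)) / (2*cos(x/2))^2.

Lemma hd_derive m x : 0 <= x <= PI/2 -> is_derive (hf m) x (hd m x).
Proof.
  intro Hx. pose proof (cos_half_pos x Hx). pose proof (qf_derive m (PI/2) x) as Hq.
  unfold hf, hd. auto_derive.
  - split; [eexists; eauto| split; [lra|exact I]].
  - match goal with |- context [Derive ?f x] =>
        replace (Derive f x) with (x^m)
          by (symmetry; apply is_derive_unique; exact Hq) end.
    change (x * /2) with (x/2). field. lra.
Qed.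

Lemma hd_cont m x : 0 <= x <= PI/2 -> continuous (hd m) x.
Proof.
  intro Hx. pose proof (cos_half_pos x Hx). apply cont_der. unfold hd.
  auto_derive. repeat split; try lra. eexists; apply qf_derive. change (x * /2) with (x/2). apply Rmult_integral_contrapositive; split; [lra|]. apply Rmult_integral_contrapositive; split; lra.
Qed.

Lemma hf_cont m x : 0 <= x <= PI/2 -> continuous (hf m) x.
Proof.
  intro Hx. apply cont_der. eexists. apply hd_derive; auto.
Qed.

Lemma RL m : exists Cst, forall lam, 0 < lam ->
  Rabs (RInt (fun x => hf m x * sin (lam*x)) 0 (PI/2)) <= Cst / lam.
Proof.
  pose proof PI_RGT_0 as HPI.
  set (a := PI/2).
  set (M := RInt (fun x => Rabs (hd m x)) 0 a).
  exists (Rabs (hf m a) + Rabs (hf m 0) + M). intros lam Hl.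
  set (K := fun x => - hf m x * cos (lam*x) / lam).
  set (Kd := fun x => - hd m x * cos (lam*x) / lam + hf m x * sin (lam * x)).
  assert (HK: is_RInt Kd 0 a (minus (K a) (K 0))).
  { apply (is_RInt_derive K Kd).
    - unfold a; rewrite Rmin_0a, Rmax_0a. intros x Hx.
      pose proof (hd_derive m x Hx) as Hh. unfold K, Kd. auto_derive.
      + eexists; eauto.
      + match goal with |- context [Derive ?f x] =>
          replace (Derive f x) with (hd m x)
            by (symmetry; apply is_derive_unique; exact Hh) end.
        field. lra.
    - unfold a; rewrite Rmin_0a, Rmax_0a. intros x Hx. unfold Kd.
      apply (continuous_plus (fun x => - hd m x * cos (lam*x) / lam) (fun x => hf m x * sin (lam * x))).
      + apply (continuous_mult (fun x => - hd m x * cos (lam*x)) (fun x => / lam)).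
        apply (continuous_mult (fun x => - hd m x) (fun x => cos (lam*x))).
        apply (continuous_opp (hd m)). apply hd_cont; auto.
        apply cont_der; auto_derive; auto. apply continuous_const.
      + apply (continuous_mult (hf m) (fun x => sin (lam*x))).
        apply hf_cont; auto. apply cont_der; auto_derive; auto. }
  assert (Hex: ex_RInt (fun x => hd m x * cos (lam * x)) 0 a).
  { apply ex_RInt_cont. unfold a; rewrite Rmin_0a, Rmax_0a. intros x Hx.
    apply (continuous_mult (hd m) (fun x => cos (lam*x))). apply hd_cont; auto.
    apply cont_der; auto_derive; auto. }
  assert (H2 := RInt_scal' _ _ _ (/lam) _ (RInt_corr _ _ _ Hex)).
  assert (H3 := RInt_plus' _ _ _ _ _ _ HK H2).
  assert (E: RInt (fun x => hf m x * sin (lam*x)) 0 a =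
     minus (K a) (K 0) + / lam * RInt (fun x => hd m x * cos (lam * x)) 0 a).
  { apply (is_RInt_unique (V:=R_CompleteNormedModule)).
    eapply is_RInt_ext; [|exact H3]. intros x _. unfold Kd. change (?A = ?B) with (@eq R A B). field. lra. }
  fold a. rewrite E.
  assert (B1: Rabs (RInt (fun x => hd m x * cos (lam * x)) 0 a) <= M).
  { eapply Rle_trans. apply abs_RInt_le. unfold a; lra. exact Hex.
    apply RInt_le. unfold a; lra.
    - apply ex_RInt_cont. unfold a; rewrite Rmin_0a, Rmax_0a. intros x Hx.
      apply continuous_Rabs_comp.
      apply (continuous_mult (hd m) (fun x => cos (lam*x))). apply hd_cont; auto.
      apply cont_der; auto_derive; auto.
    - apply ex_RInt_cont. unfold a; rewrite Rmin_0a, Rmax_0a. intros x Hx.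
      apply continuous_Rabs_comp. apply hd_cont; auto.
    - intros x _. rewrite Rabs_mult. rewrite <- (Rmult_1_r (Rabs (hd m x))) at 2.
      apply Rmult_le_compat_l. apply Rabs_pos. apply Rabs_le; apply COS_bound. }
  unfold minus, plus, opp, K; simpl.
  assert (Hc1: Rabs (cos (lam * a)) <= 1) by (apply Rabs_le; apply COS_bound).
  replace (lam * 0) with 0 by ring. rewrite cos_0.
  eapply Rle_trans. apply Rabs_triang.
  assert (Hil: 0 < /lam) by (apply Rinv_0_lt_compat; lra).
  replace (- hf m a * cos (lam * a) / lam + - (- hf m 0 * 1 / lam))
    with (/lam * (- hf m a * cos(lam*a) + hf m 0)) by (field; lra).
  rewrite !Rabs_mult, (Rabs_right (/lam)) by lra.
  assert (Hab: Rabs (- hf m a * cos (lam * a) + hf m 0) <= Rabs (hf m a) + Rabs (hf m 0)).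
  { eapply Rle_trans. apply Rabs_triang. rewrite Rabs_mult, Rabs_Ropp.
    apply Rplus_le_compat_r. rewrite <- (Rmult_1_r (Rabs (hf m a))) at 2.
    apply Rmult_le_compat_l. apply Rabs_pos. exact Hc1. }
  unfold Rdiv. rewrite (Rmult_comm _ (/lam)), <- Rmult_plus_distr_l.
  apply Rmult_le_compat_l; lra.
Qed.


Lemma lim_inv_S : is_lim_seq (fun N => / (INR N + 1)) 0.
Proof.
  assert (H: is_lim_seq (fun N => INR N + 1) p_infty).
  { apply is_lim_seq_ext with (fun N => INR (S N)). intros; apply S_INR.
    apply -> is_lim_seq_incr_1. exact is_lim_seq_INR. }
  apply is_lim_seq_inv in H. exact H. discriminate.
Qed.

Lemma lim_bound (u : nat -> R) l Cst :
  (forall N, Rabs (u N - l) <= Cst / (INR N + 1)) -> is_lim_seq u l.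
Proof.
  intro Hb.
  assert (Hl: is_lim_seq (fun N => Cst / (INR N + 1)) 0).
  { replace 0 with (Cst * 0) by ring. unfold Rdiv.
    apply (is_lim_seq_scal_l _ Cst 0). exact lim_inv_S. }
  apply is_lim_seq_le_le with (fun N => l - Cst / (INR N + 1)) (fun N => l + Cst / (INR N + 1)).
  - intro N. specialize (Hb N). apply Rabs_le_between in Hb. lra.
  - replace (Finite l) with (Finite (l - 0)) by (f_equal; ring).
    apply is_lim_seq_minus'. apply is_lim_seq_const. exact Hl.
  - replace (Finite l) with (Finite (l + 0)) by (f_equal; ring).
    apply is_lim_seq_plus'. apply is_lim_seq_const. exact Hl.
Qed.

Lemma RInt_pow n : is_RInt (fun t => t^n) 0 1 (/ INR (n+1)).
Proof.
  replace (/ INR (n+1)) with (minus ((fun t => t^(n+1) / INR (n+1)) 1) ((fun t => t^(n+1) / INR (n+1)) 0)).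
  - apply (is_RInt_derive (fun t => t^(n+1) / INR (n+1)) (fun t => t^n)).
    + intros x _. auto_derive. exact I.
      replace (Init.Nat.pred (n+1)) with n by lia. field. apply INR_S_neq.
    + intros x _. apply cont_der. auto_derive. exact I.
  - unfold minus, plus, opp; simpl. rewrite pow1, pow_i by lia. field. apply INR_S_neq.
Qed.

Lemma RInt_inv1 : is_RInt (fun t => / (1 + t)) 0 1 (ln 2).
Proof.
  replace (ln 2) with (minus (ln (1+1)) (ln (1+0))).
  - apply (is_RInt_derive (fun t => ln (1 + t)) (fun t => / (1+t))).
    + intros x Hx. rewrite Rmin_left, Rmax_right in Hx by lra. auto_derive. lra. field. lra.
    + intros x Hx. rewrite Rmin_left, Rmax_right in Hx by lra. apply cont_der. auto_derive. lra.
  - unfold minus, plus, opp; simpl. replace (1+0) with 1 by ring. rewrite ln_1. replace (1+1) with 2 by ring. ring.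
Qed.

Lemma H_lim : is_lim_seq (fun N => sum_f_R0 (fun n => (-1)^n / INR (n+1)) N) (ln 2).
Proof.
  apply lim_bound with 1. intro N.
  set (HN := sum_f_R0 (fun n => (-1)^n / INR (n+1)) N).
  assert (H1: is_RInt (fun t => sum_f_R0 (fun n => (-1)^n * t^n) N) 0 1 HN).
  { unfold HN. clear HN. induction N as [|N IH].
    - exact (RInt_scal' _ _ _ _ _ (RInt_pow 0)).
    - apply RInt_plus'. exact IH. apply RInt_scal'. apply RInt_pow. }
  assert (Hr: ex_RInt (fun t => (-t)^(N+1) / (1+t)) 0 1).
  { apply ex_RInt_cont. rewrite Rmin_left, Rmax_right by lra. intros z Hz.
    apply cont_der. auto_derive. lra. }
  assert (H2 := is_RInt_minus _ _ _ _ _ _ RInt_inv1 (RInt_corr _ _ _ Hr)).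
  assert (E: HN = ln 2 - RInt (fun t => (-t)^(N+1) / (1+t)) 0 1).
  { transitivity (RInt (fun t => sum_f_R0 (fun n => (-1)^n * t^n) N) 0 1).
    symmetry. exact (is_RInt_unique (V:=R_CompleteNormedModule) _ _ _ _ H1).
    apply (is_RInt_unique (V:=R_CompleteNormedModule)).
    eapply is_RInt_ext; [|exact H2]. rewrite Rmin_left, Rmax_right by lra. intros x Hx.
    unfold minus, plus, opp; simpl.
    assert (G := GP_finite (-x) N).
    replace (sum_f_R0 (fun n => (-1)^n * x^n) N) with (sum_f_R0 (fun n => (-x)^n) N).
    2:{ apply sum_eq. intros i _. replace (-x) with (-1 * x) by ring. apply Rpow_mult_distr. }
    apply (Rmult_eq_reg_r (-x - 1)). rewrite G. field. lra. lra. }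
  rewrite E. replace (ln 2 - RInt (fun t => (- t) ^ (N + 1) / (1 + t)) 0 1 - ln 2)
    with (- RInt (fun t => (- t) ^ (N + 1) / (1 + t)) 0 1) by ring.
  rewrite Rabs_Ropp.
  eapply Rle_trans. apply abs_RInt_le. lra. exact Hr.
  apply Rle_trans with (RInt (fun t => t^(N+1)) 0 1).
  - apply RInt_le. lra.
    + apply ex_RInt_cont. rewrite Rmin_left, Rmax_right by lra. intros z Hz.
      apply continuous_Rabs_comp. apply cont_der. auto_derive. lra.
    + eexists; apply RInt_pow.
    + intros x Hx. rewrite Rabs_div by lra. rewrite <- RPow_abs, Rabs_Ropp, Rabs_right by lra.
      rewrite (Rabs_right (1+x)) by lra.
      apply Rmult_le_reg_r with (1+x). lra. unfold Rdiv. rewrite Rmult_assoc, Rinv_l by lra.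
      assert (0 <= x^(N+1)) by (apply pow_le; lra). nra.
  - rewrite (is_RInt_unique (V:=R_CompleteNormedModule) _ _ _ _ (RInt_pow (N+1))).
    unfold Rdiv; rewrite Rmult_1_l. apply Rinv_le_contravar. pose proof (pos_INR N); lra. rewrite !plus_INR; simpl; lra.
Qed.


Lemma ser_lim (a : nat -> R) l : is_series a l <-> is_lim_seq (sum_n a) l.
Proof. split; intro H; exact H. Qed.

Lemma tele_series : is_series (fun n => / INR (n+1) - / INR (n+2)) 1.
Proof.
  apply ser_lim. apply is_lim_seq_ext with (fun N => 1 - / (INR (S N) + 1)).
  - intro N. rewrite sum_n_Reals. induction N as [|N IH].
    + simpl. field.
    + rewrite tech5, <- IH. rewrite !plus_INR, !S_INR. change (INR 1) with 1. change (INR 2) with (1+1). change (INR 0) with 0. field.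
      pose proof (pos_INR N). split; lra.
  - replace (Finite 1) with (Finite (1 - 0)) by (f_equal; ring).
    apply is_lim_seq_minus'. apply is_lim_seq_const.
    apply (is_lim_seq_incr_1 (fun N => / (INR N + 1))). exact lim_inv_S.
Qed.

Lemma ex_inv_sq : ex_series (fun n => / INR (n+1) ^ 2).
Proof.
  apply (ex_series_le (V:=R_CompleteNormedModule)) with (fun n => 2 * (/ INR (n+1) - / INR (n+2))).
  - intro n. unfold norm; simpl. rewrite Rabs_right.
    2:{ apply Rle_ge, Rlt_le, Rinv_0_lt_compat. pose proof (INR_Sn_pos n). nra. }
    rewrite !plus_INR. simpl. pose proof (pos_INR n).
    replace (2 * (/ (INR n + 1) - / (INR n + (1 + 1)))) with (2 / ((INR n + 1) * (INR n + 2))) by (field; lra).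
    replace (2 / ((INR n + 1) * (INR n + 2))) with (/ ((INR n + 1) * (INR n + 2) / 2)) by (field; lra). apply Rinv_le_contravar; nra.
  - eexists. apply (is_series_scal_l 2 _ _ tele_series).
Qed.


Lemma cos_kPI k : cos (INR k * PI) = (-1)^k.
Proof. induction k. simpl. rewrite Rmult_0_l, cos_0; ring.
  rewrite S_INR, Rmult_plus_distr_r, Rmult_1_l, neg_cos, IHk. simpl; ring. Qed.
Lemma sin_kPI k : sin (INR k * PI) = 0.
Proof. induction k. simpl. rewrite Rmult_0_l, sin_0; ring.
  rewrite S_INR, Rmult_plus_distr_r, Rmult_1_l, neg_sin, IHk. ring. Qed.
Lemma cos_even k : cos (INR (2*k) * (PI/2)) = (-1)^k.
Proof. rewrite <- cos_kPI. f_equal. rewrite mult_INR. simpl. field. Qed.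
Lemma sin_even k : sin (INR (2*k) * (PI/2)) = 0.
Proof. rewrite <- (sin_kPI k). f_equal. rewrite mult_INR. simpl. field. Qed.
Lemma cos_odd k : cos (INR (2*k+1) * (PI/2)) = 0.
Proof. replace (INR (2*k+1) * (PI/2)) with (INR k * PI + PI/2)
  by (rewrite plus_INR, mult_INR; simpl; field).
  rewrite cos_plus, cos_PI2, sin_PI2, sin_kPI. ring. Qed.
Lemma sin_odd k : sin (INR (2*k+1) * (PI/2)) = (-1)^k.
Proof. replace (INR (2*k+1) * (PI/2)) with (INR k * PI + PI/2)
  by (rewrite plus_INR, mult_INR; simpl; field).
  rewrite sin_plus, cos_PI2, sin_PI2, cos_kPI. ring. Qed.

Lemma INR_pos1 n : 1 <= INR (n+1).
Proof. rewrite plus_INR. simpl. pose proof (pos_INR n). lra. Qed.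

Lemma pow_ge_sq x s : 1 <= x -> (2 <= s)%nat -> x^2 <= x^s.
Proof. intros Hx Hs. apply Rle_pow; auto. Qed.

Lemma abs_term_bound (t : R) (y : R) s n : (2 <= s)%nat -> Rabs t <= 1 -> INR (n+1) <= y ->
  Rabs (t / y^s) <= / INR (n+1) ^ 2.
Proof.
  intros Hs Ht Hy. pose proof (INR_pos1 n).
  assert (1 <= y) by lra.
  assert (Hp: INR (n+1)^2 <= y^s).
  { apply Rle_trans with (y^2). apply pow_incr. split; lra. apply pow_ge_sq; auto. }
  assert (0 < INR (n+1)^2) by (apply pow_lt; lra).
  rewrite Rabs_div. 2:{ apply pow_nonzero. lra. }
  rewrite (Rabs_right (y^s)) by (apply Rle_ge, pow_le; lra).
  unfold Rdiv. apply Rle_trans with (1 * / y^s).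
  apply Rmult_le_compat_r. apply Rlt_le, Rinv_0_lt_compat; lra. exact Ht.
  rewrite Rmult_1_l. apply Rinv_le_contravar; lra.
Qed.

Lemma ex_gen (f : nat -> R) (y : nat -> R) s : (2 <= s)%nat ->
  (forall n, Rabs (f n) <= 1) -> (forall n, INR (n+1) <= y n) ->
  ex_series (fun n => f n / (y n)^s).
Proof.
  intros Hs Hf Hy. apply (ex_series_le (V:=R_CompleteNormedModule)) with (fun n => / INR (n+1)^2).
  intro n. apply abs_term_bound; auto. exact ex_inv_sq.
Qed.

Lemma pm1_abs n : Rabs ((-1)^n) <= 1.
Proof. rewrite <- RPow_abs. replace (Rabs (-1)) with 1. rewrite pow1. lra. rewrite Rabs_left; lra. Qed.

Lemma ex_zeta s : (2 <= s)%nat -> ex_series (fun n : nat => (-1) ^ n / (INR (n + 1)) ^ s).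
Proof. intro Hs. apply (ex_gen (fun n => (-1)^n) (fun n => INR (n+1))); auto using pm1_abs. intro; lra. Qed.

Lemma ex_beta s : (2 <= s)%nat -> ex_series (fun n : nat => (-1) ^ n / (INR (2 * n + 1)) ^ s).
Proof. intro Hs. apply (ex_gen (fun n => (-1)^n) (fun n => INR (2*n+1))); auto using pm1_abs.
  intro n. apply le_INR. lia. Qed.


Ltac nz := repeat split; try apply pow_nonzero; try lra; try (apply not_0_INR; lia).

Lemma series_sub (c z : nat -> R) L k : ex_series c -> is_series z L ->
  (forall K, sum_f_R0 c (2*K+1) = k * sum_f_R0 z K) -> is_series c (k*L).
Proof.
  intros Hc Hz HK.
  assert (H1: is_lim_seq (fun K => sum_n c (2*K+1)) (Series c)).
  { apply (is_lim_seq_subseq (sum_n c) (Series c) (fun K => 2*K+1)%nat).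
    apply eventually_subseq. intro; lia. apply ser_lim, Series_correct, Hc. }
  assert (H2: is_lim_seq (fun K => sum_n c (2*K+1)) (k*L)).
  { apply is_lim_seq_ext with (fun K => k * sum_n z K).
    intro K. rewrite !sum_n_Reals. symmetry; apply HK.
    apply (is_lim_seq_scal_l _ k L). apply ser_lim, Hz. }
  assert (E: Series c = k*L).
  { apply is_lim_seq_unique in H1. apply is_lim_seq_unique in H2. rewrite H1 in H2. injection H2; auto. }
  rewrite <- E. apply Series_correct, Hc.
Qed.

Lemma cos_series s : (2 <= s)%nat ->
  is_series (fun n => (-1)^n * cos (INR (n+1) * (PI/2)) / INR (n+1)^s) (/ 2^s * zetaE s).
Proof.
  intro Hs. apply series_sub with (z := fun n => (-1) ^ n / (INR (n + 1)) ^ s).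
  - apply (ex_gen (fun n => (-1)^n * cos (INR (n+1) * (PI/2))) (fun n => INR (n+1))); auto.
    intro n. rewrite Rabs_mult. rewrite <- (Rmult_1_r 1). apply Rmult_le_compat; try apply Rabs_pos.
    apply pm1_abs. apply Rabs_le, COS_bound. intro; lra.
  - apply Series_correct, ex_zeta, Hs.
  - induction K as [|K IH].
    + simpl sum_f_R0. replace (1*(PI/2)) with (PI/2) by ring.
      replace ((1+1)*(PI/2)) with PI by field. rewrite cos_PI2, cos_PI, pow1.
      replace (1+1) with 2 by ring. field. apply pow_nonzero; lra.
    + replace (2 * S K + 1)%nat with (S (S (2*K+1))) by lia.
      rewrite !tech5, IH.
      replace (S (2*K+1) + 1)%nat with (2*(K+1)+1)%nat by lia. rewrite cos_odd.
      replace (S (S (2*K+1)) + 1)%nat with (2*(K+2))%nat by lia. rewrite cos_even.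
      rewrite mult_INR, Rpow_mult_distr.
      replace (S K + 1)%nat with (K+2)%nat by lia.
      replace (S (S (2*K+1))) with (S (2*(K+1))) by lia. rewrite pow_1_odd.
      replace (INR 2) with 2 by reflexivity.
      replace ((-1)^(K+2)) with (-((-1)^(S K))) by (replace (K+2)%nat with (S (S K)) by lia; simpl; ring).
      field. nz.
Qed.

Lemma sin_series s : (2 <= s)%nat ->
  is_series (fun n => (-1)^n * sin (INR (n+1) * (PI/2)) / INR (n+1)^s) (1 * dbeta s).
Proof.
  intro Hs. apply series_sub with (z := fun n => (-1) ^ n / (INR (2 * n + 1)) ^ s).
  - apply (ex_gen (fun n => (-1)^n * sin (INR (n+1) * (PI/2))) (fun n => INR (n+1))); auto.
    intro n. rewrite Rabs_mult. rewrite <- (Rmult_1_r 1). apply Rmult_le_compat; try apply Rabs_pos.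
    apply pm1_abs. apply Rabs_le, SIN_bound. intro; lra.
  - apply Series_correct, ex_beta, Hs.
  - induction K as [|K IH].
    + simpl sum_f_R0. replace (1*(PI/2)) with (PI/2) by ring.
      replace ((1+1)*(PI/2)) with PI by field. rewrite sin_PI2, sin_PI, pow1.
      field. nz.
    + replace (2 * S K + 1)%nat with (S (S (2*K+1))) by lia.
      rewrite !tech5, IH.
      replace (S (2*K+1) + 1)%nat with (2*(K+1)+1)%nat by lia. rewrite sin_odd.
      replace (S (S (2*K+1)) + 1)%nat with (2*(K+2))%nat by lia. rewrite sin_even.
      replace (S (2*K+1)) with (2*(K+1))%nat by lia. rewrite pow_1_even.
      replace (2 * S K + 1)%nat with (2*(K+1)+1)%nat by lia.
      replace (S K) with (K+1)%nat by lia.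
      field. nz.
Qed.


Lemma series_plus' (u v : nat -> R) X Y : is_series u X -> is_series v Y ->
  is_series (fun n => u n + v n) (X + Y).
Proof. intros H1 H2. exact (is_series_plus u v X Y H1 H2). Qed.
Lemma series_scal' (u : nat -> R) k X : is_series u X -> is_series (fun n => k * u n) (k * X).
Proof. intros H1. exact (is_series_scal k u X H1). Qed.
Lemma series_minus' (u v : nat -> R) X Y : is_series u X -> is_series v Y ->
  is_series (fun n => u n - v n) (X - Y).
Proof. intros H1 H2. exact (is_series_minus u v X Y H1 H2). Qed.
Lemma series_ext' (u v : nat -> R) X : (forall n, u n = v n) -> is_series u X -> is_series v X.
Proof. intros H1 H2. exact (is_series_ext u v X H1 H2). Qed.

Lemma sum_series (f : nat -> nat -> R) (l : nat -> R) M :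
  (forall j, (j <= M)%nat -> is_series (f j) (l j)) ->
  is_series (fun n => sum_f_R0 (fun j => f j n) M) (sum_f_R0 l M).
Proof.
  induction M as [|M IH]; intro H.
  - simpl. apply H. lia.
  - simpl. apply series_plus'. apply IH. intros; apply H; lia. apply H; lia.
Qed.

Definition coef m j := (-1)^j * (INR (fact m) / INR (fact (m-j))).

Definition La m := sum_f_R0 (fun j => coef m j * (PI/2)^(m-j) *
   (cos (INR (j+1) * (PI/2)) * (/ 2^(j+2) * zetaE (j+2)) + sin (INR (j+1) * (PI/2)) * (1 * dbeta (j+2)))) m.
Definition L0 m := (-1)^m * INR (fact m) * cos (-0 - INR (m+1) * (PI/2)) * zetaE (m+2).

Lemma T_series m : is_series (fun n => (-1)^n / INR (n+1) * (P m (INR (n+1)) 0 (PI/2) - P m (INR (n+1)) 0 0))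
   (La m - L0 m).
Proof.
  apply series_ext' with (fun n => (-1)^n / INR (n+1) * P m (INR (n+1)) 0 (PI/2) - (-1)^n / INR (n+1) * P m (INR (n+1)) 0 0).
  { intro n; ring. }
  apply series_minus'.
  - unfold La.
    eapply series_ext'; [| apply (sum_series (fun j n => coef m j * (PI/2)^(m-j) *
      (cos (INR (j+1) * (PI/2)) * ((-1)^n * cos (INR (n+1) * (PI/2)) / INR (n+1)^(j+2)) +
       sin (INR (j+1) * (PI/2)) * ((-1)^n * sin (INR (n+1) * (PI/2)) / INR (n+1)^(j+2)))))].
    + intro n. simpl. rewrite P_closed by apply INR_S_neq. unfold Pc.
      rewrite <- sum_scal_l. apply sum_eq. intros j Hj. unfold coef.
      replace (INR (n+1) * (PI/2) - 0 - INR (j+1) * (PI/2)) with (INR (n+1) * (PI/2) - INR (j+1) * (PI/2)) by ring.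
      rewrite cos_minus. replace (j+2)%nat with (S (j+1)) by lia. simpl pow.
      field. split; [apply INR_fact_neq_0 | split; [apply pow_nonzero|]; apply INR_S_neq].
    + intros j Hj. apply series_scal'. apply series_plus'; apply series_scal'.
      apply cos_series; lia. apply sin_series; lia.
  - unfold L0.
    assert (Hz := Series_correct _ (ex_zeta (m+2) ltac:(lia))).
    eapply series_ext'; [| exact (series_scal' _ ((-1)^m * INR (fact m) * cos (-0 - INR (m+1) * (PI/2))) _ Hz)].
    intro n. simpl. rewrite P_at0 by apply INR_S_neq.
    replace (m+2)%nat with (S (m+1)) by lia. simpl pow.
    field. split; [apply pow_nonzero|]; apply INR_S_neq.
Qed.


Lemma main_id m : RInt (g0 m) 0 (PI/2) = La m - L0 m + qf m (PI/2) 0 * ln 2.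
Proof.
  set (Jv := RInt (g0 m) 0 (PI/2)).
  set (Rn := fun N : nat => RInt (fun x => hf m x * sin ((INR N + 3/2) * x)) 0 (PI/2)).
  set (T := fun N => sum_n (fun n => (-1)^n / INR (n+1) * (P m (INR (n+1)) 0 (PI/2) - P m (INR (n+1)) 0 0)) N).
  set (Hs := fun N => sum_f_R0 (fun n => (-1)^n / INR (n+1)) N).
  assert (Eq: forall N, T N + qf m (PI/2) 0 * Hs N - (-1)^N * Rn N = Jv).
  { intro N. unfold T, Hs, Rn, Jv. rewrite sum_n_Reals.
    assert (S1 := stepC m N).
    apply (Rplus_eq_reg_r ((-1) ^ N * RInt (fun x : R => hf m x * sin ((INR N + 3 / 2) * x)) 0 (PI / 2))).
    rewrite <- S1. unfold Rminus at 1. rewrite Rplus_assoc, Rplus_opp_l, Rplus_0_r.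
    rewrite <- sum_scal_l, <- sum_plus. apply sum_eq. intros n _. unfold Vn. field. apply INR_S_neq. }
  destruct (RL m) as [Cst HC].
  assert (HC0: 0 <= Cst).
  { specialize (HC 1 Rlt_0_1). pose proof (Rabs_pos (RInt (fun x => hf m x * sin (1 * x)) 0 (PI / 2))). lra. }
  assert (LR: is_lim_seq (fun N => (-1)^N * Rn N) 0).
  { apply lim_bound with Cst. intro N. rewrite Rminus_0_r, Rabs_mult, <- RPow_abs.
    replace (Rabs (-1)) with 1 by (rewrite Rabs_left; lra). rewrite pow1, Rmult_1_l.
    eapply Rle_trans. apply HC. pose proof (pos_INR N); lra.
    unfold Rdiv. apply Rmult_le_compat_l; auto. apply Rinv_le_contravar; pose proof (pos_INR N); lra. }
  assert (LT: is_lim_seq T (La m - L0 m)) by (apply ser_lim, T_series).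
  assert (LH := H_lim). fold Hs in LH.
  assert (Lall: is_lim_seq (fun N => T N + qf m (PI/2) 0 * Hs N - (-1)^N * Rn N) (La m - L0 m + qf m (PI/2) 0 * ln 2 - 0)).
  { apply is_lim_seq_minus'. apply is_lim_seq_plus'. exact LT. apply is_lim_seq_scal_l with (a := qf m (PI/2) 0) (lu := ln 2). exact LH. exact LR. }
  apply is_lim_seq_ext with (v := fun _ => Jv) in Lall; [| exact Eq].
  assert (Lc := is_lim_seq_const Jv).
  apply is_lim_seq_unique in Lall. apply is_lim_seq_unique in Lc. rewrite Lc in Lall.
  injection Lall; intro; lra.
Qed.


Lemma L0_eq m : - L0 m = INR (fact m) * sin (INR (S (S m)) * PI / 2) * zetaE (S (S m)).
Proof.
  unfold L0. replace (m+2)%nat with (S (S m)) by lia.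
  replace (-0 - INR (m+1) * (PI/2)) with (- (INR (m+1) * (PI/2))) by ring. rewrite cos_neg.
  replace (INR (S (S m)) * PI / 2) with (INR (S (S m)) * (PI / 2)) by field.
  destruct (Nat.Even_or_Odd m) as [[k Hk]|[k Hk]]; subst m.
  - rewrite cos_odd. replace (S (S (2*k))) with (2*(k+1))%nat by lia. rewrite sin_even. ring.
  - replace (2*k+1+1)%nat with (2*(k+1))%nat by lia. rewrite cos_even.
    replace (S (S (2*k+1))) with (2*(k+1)+1)%nat by lia. rewrite sin_odd.
    replace (2*k+1)%nat with (S (2*k)) by lia. rewrite pow_1_odd. ring.
Qed.

Lemma qf0_eq m : qf m (PI/2) 0 * ln 2 = - ln 2 / INR (S m) * (PI/2)^(S m).
Proof. unfold qf. replace (m+1)%nat with (S m) by lia. simpl pow at 1. field. apply not_0_INR; lia. Qed.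

Lemma sum_n_Sm_R (a : nat -> R) n m : (n <= S m)%nat -> sum_n_m a n (S m) = sum_n_m a n m + a (S m).
Proof. intros; rewrite sum_n_Sm; auto. Qed.
Lemma sum_n_m_zero_R (a : nat -> R) n m : (m < n)%nat -> sum_n_m a n m = 0.
Proof. intros; rewrite sum_n_m_zero; auto. Qed.

Lemma split_even (u : nat -> R) k :
  sum_f_R0 u (2*k) = sum_f_R0 (fun i => u (2*i)%nat) k + sum_n_m (fun i => u (2*i-1)%nat) 1 k.
Proof.
  induction k as [|k IH].
  - rewrite sum_n_m_zero_R by lia. simpl. ring.
  - replace (2 * S k)%nat with (S (S (2*k))) by lia. rewrite !tech5, IH.
    rewrite sum_n_Sm_R by lia.
    replace (2 * S k - 1)%nat with (S (2*k)) by lia. replace (2 * S k)%nat with (S (S (2*k))) by lia. ring.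
Qed.

Lemma split_odd (u : nat -> R) k :
  sum_f_R0 u (2*k+1) = sum_f_R0 (fun i => u (2*i)%nat) k + sum_n_m (fun i => u (2*i-1)%nat) 1 (k+1).
Proof.
  replace (2*k+1)%nat with (S (2*k)) by lia. rewrite tech5, split_even.
  replace (k+1)%nat with (S k) by lia. rewrite sum_n_Sm_R by lia.
  replace (2 * S k - 1)%nat with (S (2*k)) by lia. ring.
Qed.

Lemma split_all (u : nat -> R) m :
  sum_f_R0 u m = sum_n (fun i => u (2*i)%nat) (m/2) + sum_n_m (fun i => u (2*i-1)%nat) 1 ((S m)/2).
Proof.
  rewrite sum_n_Reals.
  destruct (Nat.Even_or_Odd m) as [[k Hk]|[k Hk]]; subst m.
  - replace (2*k/2)%nat with k by (rewrite Nat.mul_comm, Nat.div_mul; lia).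
    replace (S (2*k) / 2)%nat with k.
    apply split_even.
    replace (S (2*k)) with (1 + k*2)%nat by lia. rewrite Nat.div_add by lia. reflexivity.
  - replace ((2*k+1)/2)%nat with k.
    replace (S (2*k+1) / 2)%nat with (k+1)%nat.
    apply split_odd.
    replace (S (2*k+1)) with ((k+1)*2)%nat by lia. rewrite Nat.div_mul; lia.
    replace (2*k+1)%nat with (1 + k*2)%nat by lia. rewrite Nat.div_add by lia. reflexivity.
Qed.


Definition uu m j := coef m j * (PI/2)^(m-j) *
   (cos (INR (j+1) * (PI/2)) * (/ 2^(j+2) * zetaE (j+2)) + sin (INR (j+1) * (PI/2)) * (1 * dbeta (j+2))).

Lemma even_term m k : (2*k <= m)%nat ->
  uu m (2*k) = (-1) ^ k * INR (fact (2 * k)) * Binomial.C m (2 * k)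
                      * (PI / 2) ^ (S (S m) - 2 * k - 2) * dbeta (2 * k + 2).
Proof.
  intro Hk. unfold uu, coef, Binomial.C.
  rewrite cos_odd, sin_odd, pow_1_even.
  replace (S (S m) - 2 * k - 2)%nat with (m - 2*k)%nat by lia.
  field. repeat split; try apply INR_fact_neq_0; try (apply pow_nonzero; lra).
Qed.

Lemma odd_term m k : (1 <= k)%nat -> (2*k - 1 <= m)%nat ->
  uu m (2*k-1) = (-1) ^ (k - 1) * INR (fact (2 * k - 1)) / 2 ^ (2 * k + 1)
                        * Binomial.C m (2 * k - 1)
                        * (PI / 2) ^ (S (S m) - 2 * k - 1) * zetaE (2 * k + 1).
Proof.
  intros H1 H2. destruct k as [|i]; [lia|].
  replace (2 * S i - 1)%nat with (2*i+1)%nat by lia.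
  replace (S i - 1)%nat with i by lia.
  replace (S (S m) - 2 * S i - 1)%nat with (m - (2*i+1))%nat by lia.
  replace (2 * S i + 1)%nat with (2*i+1+2)%nat by lia.
  unfold uu, coef, Binomial.C.
  replace (2*i+1+1)%nat with (2*(i+1))%nat by lia.
  rewrite cos_even, sin_even.
  replace (2*i+1)%nat with (S (2*i)) by lia. rewrite pow_1_odd.
  replace ((-1)^(i+1)) with (-1 * (-1)^i) by (rewrite pow_add; simpl; ring).
  field. repeat split; try apply INR_fact_neq_0; try (apply pow_nonzero; lra).
Qed.

Theorem theorem2p3 (r : nat) (hr : (2 <= r)%nat) :
  RInt (fun t => t ^ (r - 2) * ln (cos (t / 2))) 0 (PI / 2) =
    - ln 2 / INR (r - 1) * (PI / 2) ^ (r - 1)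
    + INR (fact (r - 2)) * sin (INR r * PI / 2) * zetaE r
    + sum_n (fun k => (-1) ^ k * INR (fact (2 * k)) * Binomial.C (r - 2) (2 * k)
                      * (PI / 2) ^ (r - 2 * k - 2) * dbeta (2 * k + 2))
            ((r - 2) / 2)
    + sum_n_m (fun k => (-1) ^ (k - 1) * INR (fact (2 * k - 1)) / 2 ^ (2 * k + 1)
                        * Binomial.C (r - 2) (2 * k - 1)
                        * (PI / 2) ^ (r - 2 * k - 1) * zetaE (2 * k + 1))
              1 ((r - 1) / 2).
Proof.
  destruct r as [|[|m]]; [lia|lia|].
  replace (S (S m) - 2)%nat with m by lia. replace (S (S m) - 1)%nat with (S m) by lia.
  rewrite (is_RInt_unique (V:=R_CompleteNormedModule) _ _ _ _ (stepA m)), main_id.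
  unfold La. fold (uu m). rewrite split_all.
  rewrite qf0_eq, <- L0_eq.
  match goal with |- _ = _ + _ + sum_n ?f ?N + sum_n_m ?g 1 ?M =>
    assert (E1: sum_n (fun i => uu m (2*i)%nat) N = sum_n f N);
    [ apply sum_n_ext_loc; intros k Hk; apply even_term;
      pose proof (Nat.Div0.mul_div_le m 2); nia |];
    assert (E2: sum_n_m (fun i => uu m (2*i-1)%nat) 1 M = sum_n_m g 1 M);
    [ apply sum_n_m_ext_loc; intros k Hk; apply odd_term; [lia|];
      pose proof (Nat.Div0.mul_div_le (S m) 2); nia |]
  end.
  rewrite E1, E2. change (?A = ?B) with (@eq R A B). ring.
Qed.
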